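(* Let $q\geq 0$ and $n\geq 0$ be integers. Paul has a winning strategy for the $q$-round pathological liar game with $1$ lie and initial state $(n,0)$ if and only if $$2^q\leq\begin{cases} n(q+1) & \text{if $n$ is even},\\ n(q+1)-(q-1) & \text{if $n$ is odd}.\end{cases}$$
   Context: Pathological liar game with $k=1$ lie: a state is a pair $(x_0,x_1)$ of nonnegative integers. In each of $q$ rounds Paul chooses a legal question $(a_0,a_1)$ with integers $0\leq a_i\leq x_i$, and Carole answers Y or N; the new state is $(a_0,\,a_1+x_0-a_0)$ after Y, or $(x_0-a_0,\,x_1-a_1+a_0)$ after N. Paul wins iff after $q$ rounds $x_0+x_1\geq 1$. *)

(* Defs.v *)
From mathcomp Require Import all_boot all_order all_algebra.
Set Implicit Arguments. Unset Strict Implicit. Unset Printing Implicit Defensive.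

(* In each round Paul picks a legal question
   (a0, a1) with a0 <= x0, a1 <= x1; Carole answers Y (new state
   (a0, a1 + x0 - a0)) or N (new state (x0 - a0, x1 - a1 + a0)). *)
Fixpoint paul_wins (q x0 x1 : nat) : Prop :=
  match q with
  | 0 => 1 <= x0 + x1
  | q'.+1 => exists a0 a1 : nat,
      [/\ a0 <= x0, a1 <= x1,
          paul_wins q' a0 (a1 + (x0 - a0))
        & paul_wins q' (x0 - a0) (x1 - a1 + a0)]
  end.

(* Main.v *)
Require Import Defs.
From mathcomp Require Import all_boot all_order all_algebra.
From mathcomp Require Import zify.
Import Order.TTheory GRing.Theory Num.Theory.
Definition Cw q x0 x1 : Prop :=
  2 ^ q <= x0 * q.+1 + x1 /\ (odd x0 -> 2 ^ q + q.-1 <= x0 * q.+1 + 2 * x1).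

Lemma nec q a0 a1 x0 x1 : a0 <= x0 -> a1 <= x1 ->
  Cw q a0 (a1 + (x0 - a0)) -> Cw q (x0 - a0) (x1 - a1 + a0) -> Cw q.+1 x0 x1.
Proof.
move=> h0 h1 [Y1 Y2] [N1 N2]; rewrite /Cw expnS.
set P := 2 ^ q in Y1 Y2 N1 N2 *.
set b := x0 - a0 in Y1 Y2 N1 N2 *.
have Hx : x0 = a0 + b by rewrite /b; lia.
rewrite Hx; split; first by nia.
move=> Ho.
have [lab|lba] : a0 < b \/ b < a0.
  have : a0 != b by apply/negP => /eqP E; move: Ho; rewrite E addnn odd_double.
  lia.
- have : a0 * q + q <= b * q by nia.
  nia.
- have : b * q + q <= a0 * q by nia.
  nia.
Qed.

Lemma mfacts h q k : (h + k <= q -> h*q + k*q <= q*q) /\ (q <= h + k -> q*q <= h*q + k*q).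
Proof. by split=> H; rewrite -mulnDl leq_mul2r H orbT. Qed.

Lemma pow_big q : 6 <= q -> q*q + 2*q + 2 <= 2 ^ q.
Proof.
elim: q => // q IH H.
have [->//|H5] := eqVneq q 5.
have H6 : 6 <= q by lia.
have := IH H6; rewrite expnS; nia.
Qed.
Definition BigH (P q h m s : nat) := [/\ exists P', P = 2*P', s + 2*q + 2 <= P, 6 <= q,
  (h+1 <= q -> m + q <= s) & (h + 2 <= q -> m + 2*q <= s)].
Definition SmallH (P q h m : nat) :=
  [/\ q = 0, m = 0 & P = 1] \/ [/\ q = 1, m = h & P = 2] \/ [/\ q = 2, m = 2*h & P = 4] \/
      [/\ q = 3, m = 3*h & P = 8] \/ [/\ q = 4, m = 4*h & P = 16] \/ [/\ q = 5, m = 5*h & P = 32].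
Definition AnyH P q h m := (exists s, BigH P q h m s) \/ SmallH P q h m.

Lemma c_oo (P q h m x1 h2: nat) : AnyH P q h m -> h = 2*h2+1 ->
  2*P <= 2* m + 4*h + q + 2 + x1 -> 2*P + q <= 2* m + 4*h + q + 2 + 2*x1 ->
  let u := maxn (P - (m + 2*h + 1)) ((P + q.-1 + 1 - (m + 3*h + 2)) ./2) in
  [/\ u <= x1, P <= m + 2*h + 1 + u, P + q.-1 <= m + 3*h + 2 + 2*u &
      P <= m + q + 2*h + 1 + (x1 - u)].
Proof. move=> [[s [[P' ?] ? ? ? ?]]|[[? ? ?]|[[? ? ?]|[[? ? ?]|[[? ? ?]|[[? ? ?]|[? ? ?]]]]]]] *; subst; split; lia. Qed.

Lemma c_oe (P q h m x1 h2: nat) : AnyH P q h m -> h = 2*h2 ->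
  2*P <= 2* m + 4*h + q + 2 + x1 -> 2*P + q <= 2* m + 4*h + q + 2 + 2*x1 ->
  let u := P - (m + 2*h + 1) in
  [/\ u <= x1, P <= m + 2*h + 1 + u, 
      P <= m + q + 2*h + 1 + (x1 - u) & P + q.-1 <= m + q + 3*h + 1 + 2*(x1 - u)].
Proof. move=> [[s [[P' ?] ? ? ? ?]]|[[? ? ?]|[[? ? ?]|[[? ? ?]|[[? ? ?]|[[? ? ?]|[? ? ?]]]]]]] *; subst; split; lia. Qed.

Lemma c_e (P q h m x1 h2 c: nat) : AnyH P q h m -> h = 2*h2+c -> c <= 1 ->
  2*P <= 2* m + 4*h + x1 ->
  let u := x1./2 in
  [/\ u <= x1, P <= m + 2*h + u, (c = 1 -> P + q.-1 <= m + 3*h + 2*u),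
      P <= m + 2*h + (x1 - u) & (c = 1 -> P + q.-1 <= m + 3*h + 2*(x1 - u))].
Proof. move=> [[s [[P' ?] ? ? ? ?]]|[[? ? ?]|[[? ? ?]|[[? ? ?]|[[? ? ?]|[[? ? ?]|[? ? ?]]]]]]] *; subst; split; lia. Qed.

Lemma anyH q h : AnyH (2 ^ q) q h (h * q).
Proof.
case: (leqP 6 q) => Hq.
- left; exists (q*q); split.
  + case: q Hq => [//|q] _; exists (2^q); by rewrite expnS.
  + exact: pow_big.
  + done.
  + move=> H; have := (mfacts h q 1).1 H; lia.
  + move=> H; have := (mfacts h q 2).1 H; lia.
- right.
  case: q Hq => [|[|[|[|[|[|q]]]]]] Hq //.
  + by left; split => //; lia.
  + by right; left; split => //; lia.
  + by right; right; left; split => //; lia.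
  + by right; right; right; left; split => //; lia.
  + by right; right; right; right; left; split => //; lia.
  + by right; right; right; right; right; split => //; lia.
Qed.

Lemma suff q x0 x1 : Cw q.+1 x0 x1 -> exists a0 a1,
  [/\ a0 <= x0, a1 <= x1, Cw q a0 (a1 + (x0 - a0)) & Cw q (x0 - a0) (x1 - a1 + a0)].
Proof.
move=> [W1 W2]; rewrite expnS in W1 W2.
have Hx := odd_double_half x0.
have Hh := odd_double_half x0./2.
have HA := anyH q x0./2.
move: (x0./2) Hx Hh HA => h Hx Hh HA.
move: (h./2) Hh => h2 Hh.
rewrite -!muln2 in Hx Hh.
rewrite /Cw.
case Ox: (odd x0) Hx W2 => Hx W2.
  have {}W2 := W2 erefl.
  have {}Hx : x0 = 1 + h * 2 by rewrite -Hx.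
  subst x0.
2: clear W2; have {}Hx : x0 = h * 2 by rewrite -Hx.
2: subst x0.
all: have {}Hh : h = 2 * h2 + odd h by rewrite -[in LHS]Hh addnC mulnC.
all: case Oh: (odd h) Hh => /= Hh.
- have E : 1 + h * 2 - h = h.+1 by lia.
  have [] := @c_oo (2^q) q h (h*q) x1 h2 HA ltac:(lia) ltac:(lia) ltac:(lia).
  set u := maxn _ _ => U1 U2 U3 U4.
  exists h, u; rewrite E /= Oh /=; split; [lia|lia|split=>[|_]|split=>[|//]]; lia.
- have E : 1 + h * 2 - h = h.+1 by lia.
  have [] := @c_oe (2^q) q h (h*q) x1 h2 HA ltac:(lia) ltac:(lia) ltac:(lia).
  set u := _ - _ => U1 U2 U3 U4.
  exists h, u; rewrite E /= Oh /=; split; [lia|lia|split=>[|//]|split=>[|_]]; lia.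
- have E : h * 2 - h = h by lia.
  have [] := @c_e (2^q) q h (h*q) x1 h2 1 HA ltac:(lia) ltac:(lia) ltac:(lia).
  set u := _./2 => U1 U2 U3 U4 U5.
  exists h, u; rewrite E Oh; split; [lia|lia|split=>[|_]|split=>[|_]]; lia.
- have E : h * 2 - h = h by lia.
  have [] := @c_e (2^q) q h (h*q) x1 h2 0 HA ltac:(lia) ltac:(lia) ltac:(lia).
  set u := _./2 => U1 U2 U3 U4 U5.
  exists h, u; rewrite E Oh; split; [lia|lia|split=>[|//]|split=>[|//]]; lia.
Qed.

Lemma mainl q x0 x1 : paul_wins q x0 x1 <-> Cw q x0 x1.
Proof.
elim: q x0 x1 => [|q IH] x0 x1 /=.
- rewrite /Cw expn0; split; [move=> H; split; lia | case; lia].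
- split.
  + move=> [a0 [a1 [h0 h1 /IH HY /IH HN]]]; exact: nec h0 h1 HY HN.
  + move=> /suff [a0 [a1 [h0 h1 HY HN]]]; exists a0, a1; split => //; exact/IH.
Qed.

Theorem theorem9 (q n : nat) :
  paul_wins q n 0 <->
  ((2 ^ q)%:Z <= (if odd n then (n * q.+1)%:Z - (q%:Z - 1)
                  else (n * q.+1)%:Z))%R.
Proof.
rewrite mainl /Cw.
case: q => [|q].
- rewrite expn0; case On: (odd n); [have : 0 < n by case: n On|];
  move=> *; (split; [case=> A B | move=> A; split=> [|B]]); lia.
- move: (2 ^ q.+1) => P; case: (odd n) => /=;
  (split; [case=> A B | move=> A; split=> [|B]]); lia.
Qed.
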